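(* Let $\Gamma$ be a weighted digraph with vertex set $\{1,\dots,n\}$, $n>1$, without loops and with strictly positive arc weights, with Laplacian matrix $L$ and in-forest dimension $d$. For every $\lambda\neq0$, $$\operatorname{adj}(\lambda I+L)=\sum_{k=0}^{n-d}s'_{n-d-k}(\lambda)\,(-L/\lambda)^k,\qquad\text{where } s'_i(\lambda)=\sum_{j=0}^{i}\sigma_j\lambda^{n-j-1},\ i=0,\dots,n-d.$$
   Context: $W=(w_{ij})$ is the matrix of arc weights ($w_{ij}>0$ iff there is an arc $i\to j$, else $0$). The Laplacian $L=(\ell_{ij})$: $\ell_{ij}=-w_{ij}$ for $j\ne i$, $\ell_{ii}=\sum_{k\ne i}w_{ik}$. The weight of a subgraph is the product of its arc weights (1 if no arcs); the weight of a set of subgraphs is the sum of their weights. A converging tree is a weakly connected digraph with one vertex (the root) of outdegree 0 and all others of outdegree 1; an in-forest is a spanning subgraph of $\Gamma$ whose weak components are converging trees. The in-forest dimension $d$ is the minimal number of trees in an in-forest. $\sigma_k$ is the total weight of in-forests of $\Gamma$ with $k$ arcs. $\operatorname{adj}A$ is the transposed matrix of cofactors. *)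

(* Defs.v *)
From HB Require Import structures.
From mathcomp Require Import all_boot all_order all_algebra.
Set Implicit Arguments. Unset Strict Implicit. Unset Printing Implicit Defensive.
Import Order.TTheory GRing.Theory Num.Theory.
Local Open Scope ring_scope.

Section Digraph.
Variables (R : realFieldType) (n : nat) (W : 'M[R]_n).

Definition is_arc (a : 'I_n * 'I_n) : bool := 0 < W a.1 a.2.

Definition laplacian : 'M[R]_n :=
  \matrix_(i, j) (if i == j then \sum_(k | k != i) W i k else - W i j).

(* a subgraph (spanning) is given by its arc set F *)
Definition outdeg (F : {set 'I_n * 'I_n}) (i : 'I_n) : nat :=
  #|[set a in F | a.1 == i]|.

Definition weak_adj (F : {set 'I_n * 'I_n}) : rel 'I_n :=
  fun u v => ((u, v) \in F) || ((v, u) \in F).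

(* F is an in-forest: a spanning subgraph of Gamma whose weak components are
   converging trees, i.e. every weak component has exactly one vertex (root)
   of outdegree 0 and all its other vertices have outdegree 1. *)
Definition is_inforest (F : {set 'I_n * 'I_n}) : bool :=
  [forall a in F, is_arc a] &&
  [forall x, (outdeg F x <= 1)%N &&
     (#|[set y | connect (weak_adj F) x y & outdeg F y == 0%N]| == 1%N)].

(* number of trees of an in-forest = number of roots *)
Definition ntrees (F : {set 'I_n * 'I_n}) : nat :=
  #|[set i | outdeg F i == 0%N]|.

Definition sg_weight (F : {set 'I_n * 'I_n}) : R := \prod_(a in F) W a.1 a.2.

Definition sigma (k : nat) : R :=
  \sum_(F : {set 'I_n * 'I_n} | is_inforest F && (#|F| == k)) sg_weight F.

Definition inforest_dim : nat :=
  \big[minn/n]_(F : {set 'I_n * 'I_n} | is_inforest F) ntrees F.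

Definition s' (i : nat) (lam : R) : R :=
  \sum_(j < i.+1) sigma j * lam ^+ (n - j - 1).

End Digraph.

(* Main.v *)
Require Import Defs.
From HB Require Import structures.
From mathcomp Require Import all_boot all_order all_algebra.
From mathcomp Require Import fingroup perm.
Set Implicit Arguments. Unset Strict Implicit. Unset Printing Implicit Defensive.
Import Order.TTheory GRing.Theory Num.Theory.
Local Open Scope ring_scope.
Section Comb.
Variable n : nat.
Implicit Types g : {ffun 'I_n -> option 'I_n}.

Definition nxt g (o : option 'I_n) : option 'I_n := if o is Some i then g i else None.
Definition term g i := fconnect (nxt g) (Some i) None.
Definition acyc g := [forall i, term g i].

Lemma iter_None g m : iter m (nxt g) None = None.
Proof. by elim: m => //= m ->. Qed.

Lemma termP g i : reflect (exists m, iter m (nxt g) (Some i) = None) (term g i).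
Proof.
apply: (iffP idP) => [H | [m Hm]]; last by rewrite /term -Hm; exact: fconnect_iter.
by exists (findex (nxt g) (Some i) None); rewrite iter_findex.
Qed.

Lemma term_step g i k : g i = Some k -> term g i = term g k.
Proof.
move=> gi; apply/termP/termP => [[[|m] //] | [m Hm]].
  by rewrite iterSr /= gi => Hm; exists m.
by exists m.+1; rewrite iterSr /= gi.
Qed.

Lemma term_None g i : g i = None -> term g i.
Proof. by move=> gi; apply/termP; exists 1%N; rewrite /= gi. Qed.

Lemma conn_inv (T : finType) (U : eqType) (e : rel T) (h : T -> U) :
  (forall u v, e u v -> h u = h v) -> forall x y, connect e x y -> h x = h y.
Proof.
move=> He x y /connectP [p]; elim: p x => [|z p IH] x /=; first by move=> _ ->.
by case/andP=> exz pz Hy; rewrite (He _ _ exz); exact: IH pz Hy.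
Qed.

Lemma acyc_sub g g' : acyc g -> (forall r, g' r = g r \/ g' r = None) -> acyc g'.
Proof.
move=> /forallP ag Hg; apply/forallP => x.
have /termP [m] := ag x; elim: m x => [|m IH] x; first by [].
rewrite iterSr /=.
case: (Hg x) => [e|e]; last by move=> _; exact: term_None.
case E: (g x) => [x'|] Hm; last by apply: term_None; rewrite e.
by rewrite (term_step (etrans e E)); apply: IH.
Qed.

End Comb.
Section Det.
Variable n : nat.
Implicit Types g : {ffun 'I_n -> option 'I_n}.

Definition mgv (S : pzRingType) (o : option 'I_n) (r c : 'I_n) : S :=
  if o is Some k then (r == c)%:R - (k == c)%:R else (r == c)%:R.

Definition mg (S : pzRingType) g : 'M[S]_n := \matrix_(r, c) mgv S (g r) r c.

Lemma sum_delta (S : pzRingType) (F : 'I_n -> S) i :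
  \sum_c F c * (i == c)%:R = F i.
Proof.
rewrite (bigD1 i) //= eqxx mulr1 big1 ?addr0 // => c /negPf; rewrite eq_sym => ->.
by rewrite mulr0.
Qed.

Lemma det_mg (S : idomainType) g : \det (mg S g) = (acyc g)%:R.
Proof.
case: (boolP (acyc g)) => [ag | nag].
- have ag' := forallP ag.
  rewrite /determinant (bigD1 (1%g : 'S_n)) //=.
  rewrite [X in _ + X = _]big1 ?addr0.
    rewrite odd_perm1 expr0 mul1r big1 // => i _.
    rewrite /mg !mxE perm1 /mgv; case E: (g i) => [k|]; last by rewrite eqxx.
    case: (eqVneq k i) => [ki|_]; last by rewrite eqxx subr0.
    exfalso; rewrite ki in E; have /termP [m] := ag' i.
    suff -> : iter m (nxt g) (Some i) = Some i by [].
    by elim: m => //= m ->; rewrite /nxt E.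
  move=> s sn1.
  have [i Hi] : exists i, (s i != i) && (g i != Some (s i)).
    apply/existsP; apply: contraR sn1; rewrite negb_exists => /forallP Hs.
    have H1 : forall i, s i != i -> g i = Some (s i).
      by move=> i si; have := Hs i; rewrite si /= negbK => /eqP.
    case: (boolP [exists i, s i != i]) => [/existsP [i0 si0] | ]; last first.
      rewrite negb_exists => /forallP Hf; apply/eqP/permP => i.
      by rewrite perm1; apply/eqP; have := Hf i; rewrite negbK.
    exfalso.
    have : forall m, exists y, iter m (nxt g) (Some i0) = Some y /\ s y != y.
      elim=> [|m [y [Hy sy]]]; first by exists i0.
      exists (s y); split; first by rewrite iterS Hy /= (H1 _ sy).
      by rewrite (inj_eq (@perm_inj _ s)).
    have /termP [m Hm] := ag' i0.
    by move=> /(_ m) [y [Hy _]]; rewrite Hm in Hy.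
  rewrite (bigD1 i) //= /mg !mxE /mgv; case/andP: Hi => si gi.
  case E: (g i) => [k|].
    rewrite eq_sym (negPf si); case: (eqVneq k (s i)) => [ks|_]; last first.
      by rewrite subr0 mul0r mulr0.
    by move: gi; rewrite E ks eqxx.
  by rewrite eq_sym (negPf si) mul0r mulr0.
- apply/eqP; rewrite -det_tr; apply/det0P.
  exists (\row_c (~~ term g c)%:R).
    case/forallPn: nag => r0 nr0; apply/eqP => /matrixP /(_ 0 r0).
    by rewrite !mxE nr0 => /eqP; rewrite oner_eq0.
  apply/matrixP => z i; rewrite !mxE.
  under eq_bigr do rewrite !mxE.
  rewrite /mgv; case E: (g i) => [k|].
    under eq_bigr do rewrite mulrBr.
    rewrite sumrB !sum_delta (term_step E) subrr.
    by [].
  by rewrite sum_delta (term_None E).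
Qed.

End Det.
Section Expand.
Variable n : nat.
Implicit Types g : {ffun 'I_n -> option 'I_n}.

Lemma det_expand (S : comPzRingType) (C : finType) (a : 'I_n -> C -> S)
    (b : 'I_n -> C -> 'I_n -> S) :
  \det (\matrix_(r, c) \sum_o a r o * b r o c) =
  \sum_(g : {ffun 'I_n -> C}) (\prod_r a r (g r)) * \det (\matrix_(r, c) b r (g r) c).
Proof.
rewrite /determinant.
transitivity (\sum_(s : 'S_n) (-1) ^+ s *
   \sum_(g : {ffun 'I_n -> C}) \prod_r (a r (g r) * b r (g r) (s r))).
  apply: eq_bigr => s _; congr (_ * _).
  rewrite -(bigA_distr_bigA (fun r o => a r o * b r o (s r))); apply: eq_bigr => r _; rewrite mxE //.
under eq_bigr do rewrite big_distrr.
rewrite exchange_big; apply: eq_bigr => g _ /=; rewrite big_distrr; apply: eq_bigr => s _.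
rewrite big_split mulrCA; congr (_ * (_ * _)); apply: eq_bigr => r _; rewrite mxE //.
Qed.

Definition lapl (S : pzRingType) (V : 'M[S]_n) : 'M[S]_n :=
  \matrix_(i, j) (if i == j then \sum_(k | k != i) V i k else - V i j).

Lemma sum_opt (S : nmodType) (F : option 'I_n -> S) :
  \sum_o F o = F None + \sum_k F (Some k).
Proof.
rewrite (bigD1 None) //=; congr (_ + _).
rewrite (reindex_omap Some id) //=; last by case.
by apply: eq_bigl => k; rewrite eqxx.
Qed.

Definition a0 (S : pzRingType) (x : S) (V : 'M[S]_n) r (o : option 'I_n) : S :=
  if o is Some k then V r k else x.

Lemma sum_delta' (S : pzRingType) (F : 'I_n -> S) c :
  \sum_k F k * (k == c)%:R = F c.
Proof.
rewrite (bigD1 c) //= eqxx mulr1 big1 ?addr0 // => k /negPf ->.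
by rewrite mulr0.
Qed.

Lemma A_expand (S : comPzRingType) (x : S) V :
  x%:M + lapl V = \matrix_(r, c) \sum_o a0 x V r o * mgv S o r c.
Proof.
apply/matrixP => r c; rewrite !mxE sum_opt /= /mgv.
under [X in _ = _ + X]eq_bigr do rewrite mulrBr.
rewrite sumrB sum_delta'.
case: (eqVneq r c) => [<-|rc].
  rewrite mulr1 mulr1n; congr (_ + _).
  under [X in _ = X - _]eq_bigr do rewrite mulr1.
  by rewrite [X in _ = X - _](bigD1 r) //= addrC addrK.
by rewrite mulr0 mulr0n !add0r big1 ?sub0r // => k _; rewrite mulr0.
Qed.

End Expand.
Section Cof.
Variable n : nat.
Implicit Types g : {ffun 'I_n -> option 'I_n}.

Lemma prod_pow (S : comPzRingType) g (P : pred 'I_n) (F : 'I_n -> 'I_n -> S) x :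
  \prod_(r | P r) (if g r is Some k then F r k else x) =
  x ^+ #|[set r | P r && (g r == None)]| *
  \prod_(r | P r) (if g r is Some k then F r k else 1).
Proof.
rewrite (bigID (fun r => g r == None)) /=.
rewrite [X in _ = _ * X](bigID (fun r => g r == None)) /=.
rewrite [X in _ = _ * (X * _)]big1; last by move=> r /andP [_ /eqP ->].
rewrite mul1r; congr (_ * _).
rewrite -prodr_const; apply: eq_big => [r|r /andP [_ /eqP ->]] //.
  by rewrite inE.
by apply: eq_bigr => r /andP [_]; case: (g r).
Qed.

Lemma cofactor_rowdelta (S : comPzRingType) (A : 'M[S]_n) j i :
  cofactor A j i = \det (\matrix_(r, c) if r == j then (c == i)%:R else A r c).
Proof.
rewrite expand_cofactor /determinant.
rewrite [RHS](bigID (fun s : 'S_n => s j == i)) /=.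
rewrite [X in _ = _ + X]big1 ?addr0; last first.
  move=> s /negPf sj; rewrite (bigD1 j) //= [in X in _ * (X * _)]mxE eqxx sj.
  by rewrite mul0r mulr0.
apply: eq_big => // s /eqP sj; congr (_ * _).
rewrite [RHS](bigD1 j) //= [in X in _ = X * _]mxE eqxx sj eqxx mul1r.
apply: eq_big => [r|r rj]; first by rewrite eq_sym.
by rewrite mxE eq_sym (negPf rj).
Qed.

Definition tg j g := #|[set r | (r != j) && (g r == None)]|.
Definition cg (S : pzRingType) (V : 'M[S]_n) i j g :=
  (\prod_(r | r != j) (if g r is Some k then V r k else 1)) *
  (if g j is Some k then - (k == i)%:R else 1).

Lemma adj_expand (S : idomainType) (x : S) V i j :
  \adj (x%:M + lapl V) i j = \sum_(g | acyc g) x ^+ tg j g * cg V i j g.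
Proof.
rewrite mxE cofactor_rowdelta.
pose a1 r (o : option 'I_n) : S :=
  if r == j then (if o is Some k then - (k == i)%:R else 1) else a0 x V r o.
transitivity (\det (\matrix_(r, c) \sum_o a1 r o * mgv S o r c)).
  congr (\det _); apply/matrixP => r c; rewrite [LHS]mxE [RHS]mxE /a1.
  case: (eqVneq r j) => [->|rj]; last by rewrite A_expand mxE.
  rewrite sum_opt /mgv mul1r (bigD1 i) //= big1 ?addr0; last first.
    by move=> k /negPf ->; rewrite mulr0n oppr0 mul0r.
  rewrite eqxx mulr1n mulN1r opprB addrC subrK eq_sym //.
rewrite det_expand (big_mkcond (fun g => acyc g)); apply: eq_bigr => g _.
rewrite det_mg; case: (acyc g); last by rewrite mulr0.
rewrite mulr1 (bigD1 j) //= /a1 eqxx mulrC /cg.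
rewrite (eq_bigr (fun r => if g r is Some k then V r k else x)); last first.
  by move=> r /negPf ->; rewrite /a0; case: (g r).
by rewrite prod_pow mulrA.
Qed.

End Cof.
Section Forest.
Variables (R : realFieldType) (n : nat) (W : 'M[R]_n).
Implicit Types g : {ffun 'I_n -> option 'I_n}.

Definition Fg g : {set 'I_n * 'I_n} := [set a | g a.1 == Some a.2].
Definition gF (F : {set 'I_n * 'I_n}) : {ffun 'I_n -> option 'I_n} :=
  [ffun i => [pick k | (i, k) \in F]].
Definition pos g := [forall i, if g i is Some k then 0 < W i k else true].
Definition wt (S : pzRingType) (V : 'M[S]_n) g :=
  \prod_r (if g r is Some k then V r k else 1).

Lemma outdeg_Fg g i : outdeg (Fg g) i = (g i != None).
Proof.
rewrite /outdeg; case E: (g i) => [k|] /=.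
  have -> : [set a in Fg g | a.1 == i] = [set (i, k)]; last by rewrite cards1.
  apply/setP => [[u v]].
  rewrite !inE /=; apply/andP/eqP => [[/eqP guv /eqP ui]|[-> ->]].
    by subst u; rewrite E in guv; case: guv => ->.
  by rewrite E.
have -> : [set a in Fg g | a.1 == i] = set0; last by rewrite cards0.
apply/setP => [[u v]].
rewrite !inE /=; apply/andP => [[/eqP guv /eqP ui]].
by subst u; rewrite E in guv.
Qed.

Lemma Fg_imset g :
  Fg g = (fun i => (i, odflt i (g i))) @: [set r | g r != None].
Proof.
apply/setP => [[u v]]; rewrite inE /=; apply/eqP/imsetP => [guv|[r]].
  by exists u; rewrite ?inE guv //.
rewrite inE; case E: (g r) => [k|] //= _ [-> ->]; by rewrite E.
Qed.

Lemma Fg_inj g : {in [set r | g r != None] &, injective (fun i => (i, odflt i (g i)))}.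
Proof. by move=> u v _ _ [->]. Qed.

Lemma card_Fg g : #|Fg g| = #|[set r | g r != None]|.
Proof. by rewrite Fg_imset card_in_imset //; apply: Fg_inj. Qed.

Lemma ntrees_Fg g : ntrees (Fg g) = #|[set r | g r == None]|.
Proof.
rewrite /ntrees; congr #|pred_of_set _|; apply/setP => r; rewrite !inE outdeg_Fg.
by case: (g r).
Qed.

Lemma sgw_Fg g : sg_weight W (Fg g) = wt W g.
Proof.
rewrite /sg_weight Fg_imset big_imset /=; last exact: Fg_inj.
rewrite /wt big_mkcond; apply: eq_bigr => r _ /=; rewrite inE.
by case: (g r).
Qed.

Lemma gF_Fg g : gF (Fg g) = g.
Proof.
apply/ffunP => i; rewrite ffunE; case: pickP => [k|] /=.
  by rewrite inE /= => /eqP.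
case E: (g i) => [k|] // /(_ k); by rewrite inE /= E eqxx.
Qed.

Lemma Fg_gF F : [forall x, outdeg F x <= 1]%N -> Fg (gF F) = F.
Proof.
move=> /forallP H; apply/setP => [[u v]]; rewrite inE ffunE /=.
case: pickP => [k Hk | Hn]; last by rewrite Hn.
apply/eqP/idP => [[<-] //| Huv].
have /card_le1_eqP := H u.
move=> /(_ (u, k) (u, v)); rewrite !inE /= Hk Huv eqxx => /(_ isT isT).
by case=> ->.
Qed.

Lemma fconn_step g x y : g x = Some y -> fconnect (nxt g) (Some x) (Some y).
Proof. by move=> E; have := fconnect1 (nxt g) (Some x); rewrite /= E. Qed.

Lemma iter_last g x m : iter m (nxt g) (Some x) = None ->
  exists y, fconnect (nxt g) (Some x) (Some y) /\ g y = None.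
Proof.
elim: m x => [|m IH] x //; rewrite iterSr /=.
case E: (g x) => [x'|] H.
  have [y [cy gy]] := IH x' H; exists y; split => //.
  exact: connect_trans (fconn_step E) cy.
by exists x; split; [exact: connect0|].
Qed.

Lemma iter_after g x y a b : iter a (nxt g) (Some x) = Some y -> g y = None ->
  (a < b)%N -> iter b (nxt g) (Some x) = None.
Proof.
move=> Ha gy ab; rewrite -(subnK (ltnW ab)) iterD Ha.
case E: (b - a)%N => [|m]; first by move: ab; rewrite -subn_gt0 E.
by rewrite iterSr /= gy iter_None.
Qed.

Lemma root_uniq g x y y' : fconnect (nxt g) (Some x) (Some y) -> g y = None ->
  fconnect (nxt g) (Some x) (Some y') -> g y' = None -> y = y'.
Proof.
move=> /iter_findex Ha gy /iter_findex Hb gy'.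
set a := findex _ _ _ in Ha; set b := findex _ _ _ in Hb.
case: (ltngtP a b) => [ab|ba|ab].
- by move: (iter_after Ha gy ab); rewrite Hb.
- by move: (iter_after Hb gy' ba); rewrite Ha.
- by move: Ha; rewrite ab Hb => [[]].
Qed.

Definition rt g x := odflt x [pick y | fconnect (nxt g) (Some x) (Some y) && (g y == None)].

Lemma rtP g x : term g x ->
  fconnect (nxt g) (Some x) (Some (rt g x)) /\ g (rt g x) = None.
Proof.
move=> /termP [m /iter_last [y [cy gy]]]; rewrite /rt.
case: pickP => [z /andP [cz /eqP gz] //| /(_ y)]; by rewrite cy gy eqxx.
Qed.

Lemma conn_fwd g x y m : iter m (nxt g) (Some x) = Some y ->
  connect (weak_adj (Fg g)) x y.
Proof.
elim: m x => [|m IH] x; first by case=> ->; exact: connect0.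
rewrite iterSr /=; case E: (g x) => [x'|]; last by rewrite iter_None.
move=> H; apply: connect_trans (IH _ H); apply: connect1.
by rewrite /weak_adj !inE /= E eqxx.
Qed.

Lemma inforest_Fg g : is_inforest W (Fg g) = pos g && acyc g.
Proof.
have E1 : [forall a in Fg g, is_arc W a] = pos g.
  apply/forallP/forallP => H i.
    case E: (g i) => [k|] //; have := H (i, k).
    by rewrite inE /= E eqxx.
  apply/implyP; rewrite inE => /eqP E; have := H i.1; by rewrite E.
have inv_term : forall u v, weak_adj (Fg g) u v -> term g u = term g v.
  move=> u v; rewrite /weak_adj !inE /= => /orP [/eqP e | /eqP e].
    exact: term_step e.
  by symmetry; apply: term_step e.
have E2 : [forall x, (outdeg (Fg g) x <= 1)%N &&
     (#|[set y | connect (weak_adj (Fg g)) x y & outdeg (Fg g) y == 0%N]| == 1%N)]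
     = acyc g.
  apply/forallP/forallP => H x.
    have /andP [_ /cards1P [y Hy]] := H x.
    have : y \in [set y | connect (weak_adj (Fg g)) x y & outdeg (Fg g) y == 0%N].
      by rewrite Hy set11.
    rewrite inE outdeg_Fg eqb0 negbK => /andP [cxy /eqP gy].
    by rewrite (conn_inv inv_term cxy); apply: term_None.
  have inv_rt : forall u v, weak_adj (Fg g) u v -> rt g u = rt g v.
    move=> u v; rewrite /weak_adj !inE /= => /orP [/eqP e | /eqP e].
      have [cv gv] := rtP (H v); have [cu gu] := rtP (H u).
      exact: root_uniq cu gu (connect_trans (fconn_step e) cv) gv.
    have [cv gv] := rtP (H v); have [cu gu] := rtP (H u).
    by symmetry; apply: root_uniq cv gv (connect_trans (fconn_step e) cu) gu.
  rewrite outdeg_Fg leq_b1 /=; apply/cards1P; exists (rt g x).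
  apply/setP => y; rewrite !inE outdeg_Fg eqb0 negbK; apply/andP/eqP.
    case=> cxy /eqP gy; rewrite (conn_inv inv_rt cxy).
    have [cy gy'] := rtP (H y).
    by symmetry; apply: root_uniq cy gy' (connect0 _ _) gy.
  move=> ->; have [cx gx] := rtP (H x); split; last by rewrite gx.
  exact: conn_fwd (iter_findex cx).
by rewrite /is_inforest E1 E2.
Qed.

Lemma sigma_g (hnonneg : forall i j : 'I_n, 0 <= W i j) k :
  sigma W k = \sum_(g | acyc g && (#|[set r | g r != None]| == k)) wt W g.
Proof.
rewrite /sigma (reindex_onto Fg gF) /=; last first.
  move=> F /andP [/andP [_ /forallP H] _]; apply: Fg_gF.
  by apply/forallP => x; case/andP: (H x).
rewrite [RHS](bigID pos) /= [X in _ = _ + X]big1 ?addr0.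
  apply: eq_big => [g|g _]; last by rewrite sgw_Fg.
  rewrite gF_Fg eqxx andbT inforest_Fg card_Fg.
  by case: (pos g); case: (acyc g); rewrite ?andbT ?andbF.
move=> g /andP [_ /forallPn [i Hi]].
case E: (g i) => [k'|] in Hi; last by [].
have Wz : W i k' = 0.
  by move: Hi (hnonneg i k'); rewrite le_eqVlt => /negPf ->; rewrite orbF => /eqP.
by rewrite /wt (bigD1 i) //= E Wz mul0r.
Qed.

End Forest.
Lemma det_expand_full (n : nat) (S : idomainType) (x : S) (V : 'M[S]_n) :
  \det (x%:M + lapl V) =
  \sum_(g | acyc g) x ^+ #|[set r | g r == None]| * wt V g.
Proof.
rewrite A_expand det_expand (big_mkcond (fun g => acyc g)); apply: eq_bigr => g _.
rewrite det_mg; case: (acyc g); last by rewrite mulr0.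
rewrite mulr1 /a0.
have := prod_pow g xpredT V x; rewrite /= => ->.
by congr (_ ^+ #|_| * _); apply/setP => r; rewrite !inE.
Qed.

Section Dim.
Variables (R : realFieldType) (n : nat) (W : 'M[R]_n).

Lemma bigmin_le (I : finType) (P : pred I) (f : I -> nat) m i :
  P i -> (\big[minn/m]_(j | P j) f j <= f i)%N.
Proof.
move=> Pi; have : i \in index_enum I by rewrite mem_index_enum.
elim: (index_enum I) => // x r IH; rewrite inE big_cons.
case/orP => [/eqP <-|ir]; first by rewrite Pi geq_minl.
case: (P x); last exact: IH.
exact: leq_trans (geq_minr _ _) (IH ir).
Qed.

Lemma dim_le F : is_inforest W F -> (inforest_dim W <= ntrees F)%N.
Proof. by move=> HF; apply: bigmin_le. Qed.

Definition g0 : {ffun 'I_n -> option 'I_n} := [ffun => None].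

Lemma dim_ex : exists F, is_inforest W F /\ ntrees F = inforest_dim W.
Proof.
rewrite /inforest_dim.
apply: (big_ind (fun m => exists F, is_inforest W F /\ ntrees F = m)).
- exists (Fg g0); rewrite inforest_Fg ntrees_Fg; split.
    apply/andP; split; apply/forallP => i; rewrite /g0 ?ffunE //.
    by apply: term_None; rewrite ffunE.
  rewrite -[RHS]card_ord -cardsT; congr #|pred_of_set _|.
  by apply/setP => r; rewrite !inE /g0 ffunE.
- move=> x y [F [HF eF]] [G [HG eG]].
  case: (leqP x y) => h.
    by exists F; split => //; rewrite eF; apply/esym/minn_idPl.
  by exists G; split => //; rewrite eG; apply/esym/minn_idPr/ltnW.
- by move=> F HF; exists F.
Qed.

End Dim.
From mathcomp Require Import zify.

Lemma tri_sum (V : nmodType) (F : nat -> nat -> V) N :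
  \sum_(m < N.+1) \sum_(j < m.+1) F j (m - j)%N =
  \sum_(k < N.+1) \sum_(j < (N - k).+1) F j k.
Proof.
elim: N => [|N IH]; first by rewrite !big_ord1.
rewrite big_ord_recr /= IH.
rewrite [RHS]big_ord_recr /= subnn big_ord1.
have -> : \sum_(k < N.+1) \sum_(j < (N.+1 - k).+1) F j k =
  \sum_(k < N.+1) \sum_(j < (N - k).+1) F j k + \sum_(k < N.+1) F (N.+1 - k)%N k.
  rewrite -big_split /=; apply: eq_bigr => k _.
  have kN : (k <= N)%N by rewrite -ltnS.
  by rewrite subSn // big_ord_recr /=.
rewrite -addrA; congr (_ + _).
rewrite big_ord_recl /= subn0 addrC; congr (_ + _).
rewrite (reindex_inj rev_ord_inj) /=; apply: eq_bigr => k _.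
have := ltn_ord k; rewrite /bump leq0n add1n => kN.
congr (F _ _); lia.
Qed.
Section Main.
Variables (R : realFieldType) (n : nat) (W : 'M[R]_n).
Hypothesis hn : (1 < n)%N.
Hypothesis hnonneg : forall i j : 'I_n, 0 <= W i j.
Implicit Types g : {ffun 'I_n -> option 'I_n}.

Notation L := (laplacian W).
Notation d := (inforest_dim W).

Lemma lapl_eq : lapl W = L.
Proof. by apply/matrixP => i j; rewrite !mxE. Qed.

Definition Pm t : 'M[R]_n :=
  \matrix_(i, j) \sum_(g | acyc g && (tg j g == t)) cg W i j g.

Lemma tg_lt j g : (tg j g < n)%N.
Proof.
have : (tg j g <= #|[set~ j]|)%N.
  by apply: subset_leq_card; apply/subsetP => r; rewrite !inE => /andP [].
rewrite cardsC1 card_ord; lia.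
Qed.

Lemma adj_lam (lam : R) : \adj (lam%:M + L) = \sum_(t < n) lam ^+ t *: Pm t.
Proof.
apply/matrixP => i j; rewrite -lapl_eq adj_expand summxE.
rewrite (partition_big (fun g => Ordinal (tg_lt j g)) xpredT) //=.
apply: eq_bigr => t _; rewrite !mxE big_distrr /=.
apply: eq_big => [g|g /andP [_ /eqP <-]] //.
Qed.

Lemma mapE (aT rT : Type) (f : aT -> rT) m k (A : 'M[aT]_(m, k)) i j :
  map_mx f A i j = f (A i j).
Proof. by rewrite /map_mx mxE. Qed.

Lemma lapl_map : lapl (map_mx polyC W) = map_mx polyC L.
Proof.
apply/matrixP => i j; rewrite !mxE; case: (i == j).
  by rewrite rmorph_sum; apply: eq_bigr => k _; rewrite mapE.
by rewrite rmorphN.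
Qed.

Lemma cg_map i j g : cg (map_mx polyC W) i j g = (cg W i j g)%:P.
Proof.
rewrite /cg rmorphM rmorph_prod; congr (_ * _).
  by apply: eq_bigr => r _; case: (g r) => [k|]; rewrite ?mapE ?rmorph1.
by case: (g j) => [k|]; rewrite ?rmorphN ?rmorph_nat ?rmorph1.
Qed.

Lemma wt_map g : wt (map_mx polyC W) g = (wt W g)%:P.
Proof.
rewrite /wt rmorph_prod; apply: eq_bigr => r _.
by case: (g r) => [k|]; rewrite ?mapE ?rmorph1.
Qed.

Definition Ap : 'M[{poly R}]_n := 'X%:M + lapl (map_mx polyC W).

Lemma coef_adj t i j : ((\adj Ap) i j)`_t = Pm t i j.
Proof.
rewrite adj_expand coef_sum mxE big_mkcondr /=; apply: eq_bigr => g _.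
rewrite cg_map mulrC mul_polyC coefZ coefXn.
by rewrite eq_sym; case: (tg j g == t); rewrite ?mulr1 ?mulr0.
Qed.

Lemma coef_det t : (t <= n)%N -> (\det Ap)`_t = sigma W (n - t).
Proof.
move=> tn; rewrite det_expand_full coef_sum (sigma_g hnonneg) big_mkcondr /=.
apply: eq_bigr => g _.
rewrite wt_map mulrC mul_polyC coefZ coefXn.
have -> : #|[set r | g r != None]| = (n - #|[set r | g r == None]|)%N.
  have := cardsC [set r | g r == None]; rewrite card_ord.
  suff -> : [set r | g r != None] = ~: [set r | g r == None] by lia.
  by apply/setP => r; rewrite !inE.
have hc : (#|[set r | g r == None]| <= n)%N.
  by have := max_card (pred_of_set [set r | g r == None]); rewrite card_ord.
have -> : (n - #|[set r | g r == None]| == n - t)%N = (#|[set r | g r == None]| == t).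
  by apply/eqP/eqP; lia.
by rewrite eq_sym; case: (_ == t); rewrite ?mulr1 ?mulr0.
Qed.

Lemma coef_step (b : bool) (c : R) (q : {poly R}) t :
  (('X *+ b + c%:P) * q)`_t.+1 = q`_t *+ b + c * q`_t.+1.
Proof. by rewrite mulrDl coefD mulrnAl coefMn coefXM coefCM. Qed.

Lemma Ap_entry i k : Ap i k = 'X *+ (i == k) + (L i k)%:P.
Proof. by rewrite /Ap lapl_map !mxE. Qed.

Lemma rec t : (t < n)%N -> Pm t + L *m Pm t.+1 = (sigma W (n - t.+1))%:M.
Proof.
move=> tn; apply/matrixP => i j.
have := congr1 (fun M : 'M[{poly R}]_n => (M i j)`_t.+1) (mul_mx_adj Ap).
rewrite /= [in X in X = _ -> _]mxE [in X in _ = X -> _]mxE coef_sum coefMn coef_det //.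
under eq_bigr do rewrite Ap_entry coef_step !coef_adj.
rewrite big_split /= => H; rewrite !mxE -H; congr (_ + _).
rewrite [RHS](bigD1 i) //= eqxx mulr1n [X in _ = _ + X]big1 ?addr0; first by rewrite mxE.
by move=> k /negPf; rewrite eq_sym => ->; rewrite mulr0n.
Qed.

Lemma Pm_big t : (n <= t)%N -> Pm t = 0.
Proof.
move=> nt; apply/matrixP => i j; rewrite !mxE big1 // => g /andP [_ /eqP tg_t].
by have := tg_lt j g; rewrite tg_t ltnNge nt.
Qed.

Lemma Pm_small t : (t.+1 < d)%N -> Pm t = 0.
Proof.
move=> td; apply/matrixP => i j; rewrite !mxE big1 // => g /andP [ag /eqP tgt].
pose g' := [ffun r => if r == j then None else g r].
have ag' : acyc g'.
  apply: (acyc_sub ag) => r; rewrite ffunE; case: (r == j); [right|left]; done.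
case: (boolP (pos W g')) => [pg | /forallPn [r]].
  exfalso.
  have HF : is_inforest W (Fg g') by rewrite inforest_Fg pg ag'.
  have := dim_le HF; rewrite ntrees_Fg.
  have -> : [set r | g' r == None] = j |: [set r | (r != j) && (g r == None)].
    apply/setP => r; rewrite !inE ffunE.
    by case: (r == j).
  rewrite cardsU1 inE eqxx /= -/(tg j g) tgt.
  lia.
rewrite ffunE; case: (eqVneq r j) => [_ //|rj].
case E: (g r) => [k|] //= Hr.
have Wz : W r k = 0.
  by move: Hr (hnonneg r k); rewrite le_eqVlt => /negPf ->; rewrite orbF => /eqP.
by rewrite /cg (bigD1 r) //= E Wz !mul0r.
Qed.

Definition T m : 'M[R]_n := \sum_(j < m.+1) sigma W j *: (- L) ^+ (m - j)%N.

Lemma Pm_T m : (m < n)%N -> Pm (n - m.+1)%N = T m.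
Proof.
elim: m => [|m IH] mn.
  have H := rec (t := n.-1) ltac:(lia).
  rewrite (Pm_big (t := n.-1.+1)) in H; last lia.
  rewrite mulmx0 addr0 in H.
  have -> : (n - 1)%N = n.-1 by lia.
  rewrite H /T big_ord1 subnn expr0 scalemx1.
  by have -> : (n - n.-1.+1)%N = 0%N by lia.
have := rec (t := (n - m.+2)%N).
have -> : (n - m.+2).+1 = (n - m.+1)%N by lia.
rewrite IH; last lia.
move=> /(_ ltac:(lia)) H.
have -> : Pm (n - m.+2)%N = (sigma W (n - (n - m.+1)))%:M - L *m T m.
  by rewrite -H addrK.
have -> : (n - (n - m.+1))%N = m.+1 by lia.
rewrite [T m.+1]/T big_ord_recr /= subnn expr0 scalemx1 addrC; congr (_ + _).
rewrite -mulNmx /T mulmx_sumr; apply: eq_bigr => k _.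
rewrite -scalemxAr; congr (_ *: _).
have km : (k <= m)%N by rewrite -ltnS.
by rewrite subSn // exprS mulmxE.
Qed.

Lemma d_bounds : (0 < d)%N /\ (d <= n)%N.
Proof.
have [F [HF eF]] := dim_ex W; rewrite -eF; split; last first.
  by have := max_card (pred_of_set [set i | outdeg F i == 0%N]); rewrite card_ord.
have HF' := HF; move: HF'; rewrite -(Fg_gF (F := F)); last first.
  by case/andP: HF => _ /forallP H; apply/forallP => x; case/andP: (H x).
rewrite inforest_Fg => /andP [_ /forallP ag].
have x0 : 'I_n by exists 0%N; lia.
have [_ gx] := rtP (ag x0).
rewrite -(Fg_gF (F := F)); last first.
  by case/andP: HF => _ /forallP H; apply/forallP => x; case/andP: (H x).
rewrite ntrees_Fg; apply/card_gt0P; exists (rt (gF F) x0).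
by rewrite inE gF_Fg gx.
Qed.

Lemma exprZ_mx (c : R) (A : 'M[R]_n) k : (c *: A) ^+ k = c ^+ k *: A ^+ k.
Proof.
elim: k => [|k IH]; first by rewrite !expr0 scale1r.
by rewrite !exprS IH -!mulmxE -scalemxAr !scalemxAl scalerA mulrC.
Qed.

Lemma final (lam : R) : lam != 0 ->
  \adj (lam%:M + L) =
  \sum_(k < (n - d).+1) s' W (n - d - k) lam *: (- (lam^-1 *: L)) ^+ k.
Proof.
move=> hlam; have [d0 dn] := d_bounds.
set N := (n - d)%N.
have hN : (N.+1 <= n)%N by rewrite /N; lia.
rewrite adj_lam (reindex_inj rev_ord_inj) /=.
pose G (m : nat) := lam ^+ (n - m.+1) *: Pm (n - m.+1)%N.
have -> : \sum_(m < n) lam ^+ (n - m.+1) *: Pm (n - m.+1)%N = \sum_(m < N.+1) G m.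
  rewrite (big_ord_widen n G hN) [LHS](bigID (fun m : 'I_n => (m < N.+1)%N)) /=.
  rewrite [X in _ + X = _](_ : _ = 0) ?addr0 //.
  rewrite big1 // => m; rewrite -leqNgt => Hm.
  rewrite Pm_small ?scaler0 //.
  have := ltn_ord m; rewrite /N in Hm *; lia.
pose F (j k : nat) := (sigma W j * lam ^+ (n - 1 - j - k)) *: (- L) ^+ k.
transitivity (\sum_(m < N.+1) \sum_(j < m.+1) F j (m - j)%N).
  apply: eq_bigr => m _; rewrite /G Pm_T; last by have := ltn_ord m; lia.
  rewrite /T scaler_sumr; apply: eq_bigr => j _; rewrite scalerA /F.
  congr (_ *: _); rewrite mulrC; congr (_ * lam ^+ _).
  have := ltn_ord j; lia.
rewrite tri_sum; apply: eq_bigr => k _.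
rewrite /s' scaler_suml; apply: eq_bigr => j _.
rewrite -scalerN exprZ_mx scalerA /F; congr (_ *: _).
rewrite -mulrA; congr (_ * _).
have jk : (n - j - 1 = (n - 1 - j - k) + k)%N.
  by have := ltn_ord j; have := ltn_ord k; rewrite /N; lia.
rewrite jk exprD exprVn -mulrA mulfV ?mulr1 //.
by rewrite expf_neq0.
Qed.

End Main.

Theorem corollary4 (R : realFieldType) (n : nat) (W : 'M[R]_n)
  (hn : (1 < n)%N)
  (hloop : forall i : 'I_n, W i i = 0)
  (hnonneg : forall i j : 'I_n, 0 <= W i j)
  (lam : R) (hlam : lam != 0) :
  \adj (lam%:M + laplacian W) =
  \sum_(k < (n - inforest_dim W).+1)
     s' W (n - inforest_dim W - k) lam *: (- (lam^-1 *: laplacian W)) ^+ k.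
Proof. exact (@final R n W hn hnonneg lam hlam). Qed.
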